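(* Let $h$ be an integer with $1\le h\le u$. If $\beta$ is a root of $S(X)$ of multiplicity at least $2^h$, then for every $j\in\{0,1,\dots,2^h-1\}$ \[ 1+K\big(\eta_{j/2^h}\chi\big)\equiv 0\pmod{2\mathcal{P}\,\mathbb{Z}[\zeta_{2^hk}]}. \]
   Context: Let $p$ be an odd prime, $m\ge1$, $q=p^m$, $\alpha$ a primitive element of $\mathbb{F}_q$, and $T=q-1$; write $T=2^uT'$ with $u\ge1$ and $T'$ odd. The binary SLCE sequence $(s_n)_{n\ge0}$ is defined as follows: $s_n=1$ if $\alpha^n+1$ is a nonzero non-square of $\mathbb{F}_q$, and $s_n=0$ otherwise. Put $S(X)=\sum_{n=0}^{T-1}s_nX^n\in\mathbb{F}_2[X]$. Multiplicities of roots are taken in $\overline{\mathbb{F}_2}[X]$. Let $\beta$ be an element of an algebraic closure of $\mathbb{F}_2$ with $\beta^T=1$ and multiplicative order $k>1$ (so $k$ is odd). Let $f$ be the order of $2$ modulo $k$, and write $\zeta_N=e^{2\pi i/N}$. Let $\mathcal{P}$ be a prime ideal of $\mathbb{Z}[\zeta_k]$ containing $2$. Fix a field isomorphism $\phi:\mathbb{F}_2(\beta)=\mathbb{F}_{2^f}\to\mathbb{Z}[\zeta_k]/\mathcal{P}$, and let $\zeta$ be the unique complex $k$-th root of unity with $\phi(\beta)=\zeta+\mathcal{P}$. Multiplicative characters of $\mathbb{F}_q$ are homomorphisms $\mathbb{F}_q^*\to\mathbb{C}^*$, extended by value $0$ at $0$. For a rational $j$ with $(q-1)j\in\mathbb{Z}$,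 $\eta_j$ is the character with $\eta_j(\alpha)=e^{2\pi ij}$. Let $\rho=\eta_{1/2}$ be the quadratic character. Let $\chi$ be the character with $\chi(\alpha^n)=\zeta^n$. For a character $\psi$, set $K(\psi)=\sum_{x\in\mathbb{F}_q}\rho(x)\psi(1-x)$. For an ideal $I$ of $\mathbb{Z}[\zeta_k]$, $I\,\mathbb{Z}[\zeta_{2^hk}]$ is the ideal it generates in $\mathbb{Z}[\zeta_{2^hk}]$. *)

(* Defs.v *)
From HB Require Import structures.
From mathcomp Require Import all_boot all_order all_algebra all_field.
Set Implicit Arguments. Unset Strict Implicit. Unset Printing Implicit Defensive.
Import Order.TTheory GRing.Theory Num.Theory.
Local Open Scope ring_scope.

(* zeta_N = e^{2 pi i / N} in algC :  N.-root (-1) = e^{i pi / N}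
   (the root with minimal nonnegative argument), squared. *)
Definition zetaN (N : nat) : algC := (N.-root (-1)) ^+ 2.

Definition Zcyc (N : nat) (x : algC) : Prop :=
  exists p : {poly int}, x = (map_poly intr p).[zetaN N].

(* x lies in the ideal I Z[zeta_N] generated in Z[zeta_N] by 2 I,
   i.e. x = sum_i 2 * p_i * r_i with p_i in I, r_i in Z[zeta_N]. *)
Definition in_ext_ideal2 (I : algC -> Prop) (N : nat) (x : algC) : Prop :=
  exists rs : seq (algC * algC),
    (forall r, r \in rs -> I r.1 /\ Zcyc N r.2) /\
    x = \sum_(r <- rs) 2 * r.1 * r.2.

(* discrete logarithm base a in F (meaningful for a primitive, x <> 0) *)
Definition dlog (F : finFieldType) (a x : F) : nat :=
  index x (mkseq (fun n => a ^+ n) #|F|.-1).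

(* the multiplicative character with value w at the primitive element a,
   extended by 0 at 0 *)
Definition mchar (F : finFieldType) (a : F) (w : algC) (x : F) : algC :=
  if x == 0 then 0 else w ^+ dlog a x.

Definition rho (F : finFieldType) (a : F) : F -> algC := mchar a (-1).

Definition Ksum (F : finFieldType) (a : F) (psi : F -> algC) : algC :=
  \sum_(x : F) rho a x * psi (1 - x).

Definition slce (F : finFieldType) (a : F) (n : nat) : bool :=
  (a ^+ n + 1 != 0) && ~~ [exists y : F, y ^+ 2 == a ^+ n + 1].

(* S(X) = sum_{n<T} s_n X^n, viewed (via F_2 -> L) in L[X] for a field L of
   characteristic 2 *)
Definition Spoly (F : finFieldType) (a : F) (L : fieldType) : {poly L} :=
  \poly_(n < #|F|.-1) ((slce a n)%:R : L).

(* Main.v *)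
Require Import Defs.
From HB Require Import structures.
From mathcomp Require Import all_boot all_order all_algebra all_field.
From mathcomp Require Import ring zify.
Import Order.TTheory GRing.Theory Num.Theory.
Local Open Scope ring_scope.


Lemma N1neq1 : (-1 : algC) != 1.
Proof.
apply/eqP => h; have : (2%:R : algC) = 0 by rewrite -[2%N]/(1+1)%N natrD -{1}h addNr.
by move/eqP; rewrite pnatr_eq0.
Qed.

Lemma unit_norm1 (v : algC) n : (0 < n)%N -> v ^+ n = -1 -> `|v| = 1.
Proof.
move=> n0 hv; apply/eqP; rewrite -(pexpr_eq1 n0) ?normr_ge0 // -normrX hv.
by rewrite normrN normr1.
Qed.

Lemma dist1_Re (v : algC) : `|v| = 1 -> `|1 - v| ^+ 2 = 2%:R - 2%:R * 'Re v.
Proof.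
move=> hv; rewrite normCK rmorphB /= rmorph1 ReE.
have h2 : (2%:R : algC) != 0 by rewrite pnatr_eq0.
rewrite [2%:R * _]mulrC divfK //.
have : v * v^* = 1 by rewrite -normCK hv expr1n.
move=> e; rewrite mulrBl !mulrBr !mul1r mulr1 e.
rewrite -[2%N]/(1+1)%N natrD; ring.
Qed.


Lemma Re_max (N : nat) (w : algC) : (0 < N)%N -> w ^+ N = -1 ->
  'Re w <= 'Re (N.-root (-1)).
Proof.
move=> N0 hw.
have Ir : 'Im w \is Num.real by apply: Creal_Im.
case/real_ge0P: Ir => [hI|hI]; first exact: rootC_Re_max.
rewrite -Re_conj; apply: rootC_Re_max => //.
  by rewrite -rmorphXn /= hw rmorphN1.
by rewrite Im_conj oppr_ge0 ltW.
Qed.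

Lemma geom0 (x : algC) e : x ^+ e = 1 -> x != 1 -> \sum_(i < e) x ^+ i = 0.
Proof.
move=> h1 h2; have := subrX1 x e; rewrite h1 subrr => /esym/eqP.
by rewrite mulf_eq0 subr_eq0 (negbTE h2) /= => /eqP.
Qed.

Lemma rootN1_prim N : (0 < N)%N -> (N.*2).-primitive_root (N.-root (-1 : algC)).
Proof.
move=> N0; set y := N.-root (-1 : algC).
have yN : y ^+ N = -1 by rewrite /y rootCK.
have y2N : y ^+ (N.*2) = 1 by rewrite -addnn exprD yN mulrNN mulr1.
have N20 : (0 < N.*2)%N by rewrite double_gt0.
have [d prd ddvd] := prim_order_exists N20 y2N.
case: (eqVneq d N.*2) => [<- //|dne].
have ndN : ~~ (d %| N)%N by rewrite (prim_order_dvd prd) yN N1neq1.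
have d0 : (0 < d)%N := prim_order_gt0 prd.
have dev : ~~ odd d.
  apply/negP => od; move: ddvd; rewrite -muln2 Gauss_dvdl ?coprimen2 //.
  by rewrite (negbTE ndN).
set M := d./2.
have dM : d = M.*2 by rewrite /M -{1}(odd_double_half d) (negbTE dev).
have M0 : (0 < M)%N by move: d0; rewrite dM double_gt0.
have MN : (M %| N)%N by move: ddvd; rewrite dM -!muln2 dvdn_pmul2r.
set e := (N %/ M)%N.
have NeM : N = (e * M)%N by rewrite /e divnK.
have eodd : odd e.
  case: (boolP (odd e)) => // ee; exfalso; move/negP: ndN; apply.
  rewrite NeM dM -(odd_double_half e) (negbTE ee) add0n -!muln2.
  by rewrite mulnAC -mulnA dvdn_mull.
have e1 : e != 1%N.
  apply/eqP => e1; move: NeM; rewrite e1 mul1n => NM.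
  by move/eqP: dne; apply; rewrite dM NM.
have e0 : (0 < e)%N by case: (e) eodd.
have egt1 : (1 < e)%N by rewrite ltn_neqAle eq_sym e1 e0.
have yM : y ^+ M = -1.
  have : (y ^+ M) ^+ 2 = 1 by rewrite -exprM muln2 -dM prim_expr_order.
  move/eqP; rewrite sqrf_eq1 => /orP[/eqP h|/eqP //].
  move: h => /eqP; rewrite -(prim_order_dvd prd) => /(dvdn_leq M0).
  rewrite dM -addnn; move: M0; lia.
have [eps peps] := C_prim_root_exists e0.
set w0 := e.-root y.
have w0e : w0 ^+ e = y by rewrite /w0 rootCK.
pose w (t : nat) := w0 * eps ^+ t.
have we t : w t ^+ e = y by rewrite /w exprMn w0e exprAC (prim_expr_order peps) expr1n mulr1.
have wN t : w t ^+ N = -1 by rewrite NeM exprM we yM.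
pose S (t : 'I_e) := \sum_(i < e) w t ^+ i.
have sumS : \sum_(t < e) S t = e%:R.
  rewrite /S exchange_big /=.
  rewrite (eq_bigr (fun i : 'I_e => w0 ^+ i * \sum_(t < e) (eps ^+ i) ^+ t)); last first.
    move=> i _; rewrite mulr_sumr; apply: eq_bigr => t _.
    by rewrite /w exprMn -!exprM mulnC.
  rewrite (bigD1 (Ordinal e0)) //= expr0 mul1r.
  rewrite (eq_bigr (fun _ => 1)); last by move=> t _; rewrite expr1n.
  rewrite sumr_const card_ord big1 ?addr0 //.
  move=> i ine0; rewrite geom0 ?mulr0 //.
    by rewrite exprAC (prim_expr_order peps) expr1n.
  have i0 : (0 < i)%N.
    by rewrite lt0n; apply: contraNneq ine0 => h; apply/eqP/val_inj.
  rewrite -(prim_order_dvd peps); apply/negP => /(dvdn_leq i0).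
  by rewrite leqNgt ltn_ord.
have yS (t : 'I_e) : 1 - y = (1 - w t) * S t.
  have h := subrX1 (w t) e; rewrite we in h.
  by rewrite /S -opprB h -mulNr opprB.
have [t Ht] : exists t : 'I_e, 1 < `|S t|.
  case: (pickP (fun t => 1 < `|S t|)) => [t Ht|H]; first by exists t.
  have allS : forall t, true -> S t = 1.
    apply: (normC_sum_upper (P:=predT) (F:=S) (G:=fun _ => 1)) => [t _|].
      by rewrite real_leNgt ?H ?real1 ?normr_real.
    by rewrite sumS sumr_const card_ord.
  have := yS (Ordinal e0); have := yS (Ordinal egt1).
  have w00 : w0 != 0.
    apply/eqP => w00; move: yN; rewrite -w0e w00 expr0n (gtn_eqF e0) expr0n.
    by rewrite (gtn_eqF N0) => /eqP; rewrite eq_sym oppr_eq0 oner_eq0.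
  rewrite !allS // !mulr1 => -> /addrI/oppr_inj.
  rewrite /w /= expr0 expr1 mulr1 -{2}(mulr1 w0) => h; have h1 := mulfI w00 h.
  by move: (prim_order_dvd peps 1); rewrite expr1 h1 eqxx dvdn1 (negbTE e1).
have wne1 : w t != 1.
  by apply/eqP => h; move: (wN t); rewrite h expr1n => /eqP; rewrite eq_sym (negbTE N1neq1).
have nw : `|1 - w t| ^+ 2 < `|1 - y| ^+ 2.
  rewrite (yS t) normrM exprMn ltr_pMr.
    by have := ltrXn2r 2 ler01 Ht; rewrite expr1n => ->.
  by rewrite exprn_gt0 // normr_gt0 subr_eq0 eq_sym.
have nwt := unit_norm1 (w t) N N0 (wN t); have ny := unit_norm1 y N N0 yN.
rewrite !dist1_Re // in nw.
have := Re_max N (w t) N0 (wN t); rewrite -/y => h.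
have : 2%:R - 2%:R * 'Re y <= 2%:R - 2%:R * 'Re (w t).
  by rewrite lerD2l lerN2 ler_pM2l ?ltr0n.
by move=> h2; have := lt_le_trans nw h2; rewrite ltxx.
Qed.

Lemma zetaN_prim N : (0 < N)%N -> N.-primitive_root (zetaN N).
Proof.
move=> N0; have hd : (N %| N.*2)%N by rewrite -muln2 dvdn_mulr.
have := dvdn_prim_root (rootN1_prim N N0) hd.
by rewrite -muln2 mulKn.
Qed.


Section Zc.
Variable N : nat.

Lemma Zcyc_add x y : Zcyc N x -> Zcyc N y -> Zcyc N (x + y).
Proof. by move=> [p ->] [q ->]; exists (p + q); rewrite rmorphD hornerD. Qed.

Lemma Zcyc_mul x y : Zcyc N x -> Zcyc N y -> Zcyc N (x * y).
Proof. by move=> [p ->] [q ->]; exists (p * q); rewrite rmorphM hornerM. Qed.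

Lemma Zcyc_int (c : int) : Zcyc N (c%:~R).
Proof. by exists c%:P; rewrite map_polyC hornerC. Qed.

Lemma Zcyc0 : Zcyc N 0. Proof. by have := Zcyc_int 0. Qed.
Lemma Zcyc1 : Zcyc N 1. Proof. by have := Zcyc_int 1. Qed.
Lemma ZcycN1 : Zcyc N (-1). Proof. by have := Zcyc_int (-1). Qed.

Lemma Zcyc_zexp m : Zcyc N (zetaN N ^+ m).
Proof. by exists 'X^m; rewrite map_polyXn hornerXn. Qed.

Lemma Zcyc_exp x n : Zcyc N x -> Zcyc N (x ^+ n).
Proof.
move=> hx; elim: n => [|n IH]; first exact: Zcyc1.
by rewrite exprS; apply: Zcyc_mul.
Qed.

Lemma Zcyc_sum (I : Type) (r : seq I) (Pr : pred I) (f : I -> algC) :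
  (forall i, Zcyc N (f i)) -> Zcyc N (\sum_(i <- r | Pr i) f i).
Proof.
move=> hf; elim: r => [|a r IH]; first by rewrite big_nil; exact: Zcyc0.
rewrite big_cons; case: (Pr a) => //; exact: Zcyc_add.
Qed.

Lemma Zcyc_unity x : (0 < N)%N -> x ^+ N = 1 -> Zcyc N x.
Proof.
move=> N0 hx; have [i ->] := prim_rootP (zetaN_prim N N0) hx; exact: Zcyc_zexp.
Qed.

End Zc.


Section FF.
Variables (F : finFieldType) (a : F).
Hypothesis ha : #|F|.-1.-primitive_root a.
Local Notation T := #|F|.-1.

Lemma T0 : (0 < T)%N. Proof. exact: prim_order_gt0 ha. Qed.

Lemma a_neq0 : a != 0.
Proof. by rewrite (prim_root_eq0 ha) -lt0n T0. Qed.

Lemma expa_neq0 n : a ^+ n != 0.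
Proof. by rewrite expf_neq0 // a_neq0. Qed.

Lemma mkseq_uniq : uniq (mkseq (fun n => a ^+ n) T).
Proof.
rewrite map_inj_in_uniq ?iota_uniq // => i j; rewrite !mem_iota !add0n => /andP[_ hi] /andP[_ hj].
by move/eqP; rewrite (eq_prim_root_expr ha) !modn_small // => /eqP.
Qed.

Lemma dlog_exp n : dlog a (a ^+ n) = (n %% T)%N.
Proof.
rewrite /dlog -(prim_expr_mod ha).
have hn : (n %% T < T)%N by rewrite ltn_pmod // T0.
rewrite -{1}(nth_mkseq 0 (fun n => a ^+ n) hn) index_uniq ?size_mkseq //.
exact: mkseq_uniq.
Qed.

Lemma mchar_exp (w : algC) n : w ^+ T = 1 -> mchar a w (a ^+ n) = w ^+ n.
Proof.
move=> hw; rewrite /mchar (negbTE (expa_neq0 n)) dlog_exp.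
exact: expr_mod.
Qed.

Lemma nonzero_exp x : x != 0 -> {i : 'I_T | x = a ^+ i}.
Proof.
move=> x0; apply: (prim_rootP ha).
have hc : #|F| = T.+1 by rewrite prednK // (cardD1 0) inE.
have := expf_card x; rewrite hc exprS => h.
by apply: (mulfI x0); rewrite h mulr1.
Qed.

Lemma sumF (f : F -> algC) :
  \sum_(x : F) f x = f 0 + \sum_(n < T) f (a ^+ n).
Proof.
rewrite (bigD1 0) //=; congr (_ + _).
pose h (i : 'I_T) := a ^+ i.
have hinj : {in [set: 'I_T] &, injective h}.
  move=> i j _ _; rewrite /h => /eqP; rewrite (eq_prim_root_expr ha) !modn_small //.
  by move/eqP/val_inj.
transitivity (\sum_(i in [set: 'I_T]) f (h i)); last by apply: eq_bigl => i; rewrite inE.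
rewrite -(big_imset _ hinj) /=.
apply: eq_bigl => x; apply/idP/imsetP.
  by move=> /nonzero_exp [i ->]; exists i; rewrite ?inE.
by move=> [i _ ->]; rewrite /h expa_neq0.
Qed.

End FF.
Arguments T0 {F a} ha.
Arguments a_neq0 {F a} ha.
Arguments expa_neq0 {F a} ha n.
Arguments dlog_exp {F a} ha n.
Arguments mchar_exp {F a} ha w n.
Arguments nonzero_exp {F a} ha x.
Arguments sumF {F a} ha f.


Section Rho.
Variables (F : finFieldType) (a : F).
Hypothesis ha : #|F|.-1.-primitive_root a.
Local Notation T := #|F|.-1.
Hypothesis Tev : ~~ odd T.

Lemma Thalf : T = (T./2).*2.
Proof. by rewrite -{1}(odd_double_half T) (negbTE Tev). Qed.

Lemma Thalf_lt : (T./2 < T)%N.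
Proof. have := T0 ha; rewrite {2}Thalf -addnn; lia. Qed.

Lemma a_half : a ^+ T./2 = -1.
Proof.
have : (a ^+ T./2) ^+ 2 = 1 by rewrite -exprM muln2 -Thalf (prim_expr_order ha).
move/eqP; rewrite sqrf_eq1 => /orP[/eqP h|/eqP //].
move: h => /eqP; rewrite -(prim_order_dvd ha) => /dvdn_leq.
have := T0 ha; rewrite {1 3}Thalf -addnn => h0 h1.
have : (0 < T./2)%N by lia.
by move=> /h1; lia.
Qed.

Lemma signT : (-1 : algC) ^+ T = 1.
Proof. by rewrite -signr_odd (negbTE Tev). Qed.

Lemma rho_val n : (n < T)%N ->
  rho a (1 + a ^+ n) = if n == T./2 then 0 else if slce a n then -1 else 1.
Proof.
move=> nT; rewrite /rho.
case: eqP => [->|nh].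
  by rewrite a_half subrr /mchar eqxx.
have x0 : 1 + a ^+ n != 0.
  apply/eqP => h; apply: nh; have : a ^+ n = a ^+ T./2.
    by rewrite a_half -[a ^+ n](addKr 1) h addr0.
  move/eqP; rewrite (eq_prim_root_expr ha) !modn_small //; last exact: Thalf_lt.
  by move/eqP.
rewrite /slce [a ^+ n + 1]addrC x0 /=.
have [i hi] := nonzero_exp ha _ x0.
case: existsP => [[y /eqP hy]|hno] /=.
  have y0 : y != 0 by apply: contraNneq x0 => y0; rewrite -hy y0 expr0n.
  have [j hj] := nonzero_exp ha _ y0.
  by rewrite -hy hj -exprM (mchar_exp ha) ?signT // mulnC exprM sqrrN expr1n expr1n.
rewrite hi (mchar_exp ha) ?signT // -signr_odd.
case: (boolP (odd i)) => [//|ie]; exfalso; apply: hno.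
exists (a ^+ i./2); rewrite -exprM muln2.
have -> : (i./2.*2)%N = i by rewrite -{2}(odd_double_half i) (negbTE ie) add0n.
by rewrite -hi addrC.
Qed.

End Rho.
Arguments Thalf {F} Tev.
Arguments Thalf_lt {F a} ha Tev.
Arguments a_half {F a} ha Tev.
Arguments signT {F} Tev.
Arguments rho_val {F a} ha Tev n.


Section K.
Variables (F : finFieldType) (a : F).
Hypothesis ha : #|F|.-1.-primitive_root a.
Local Notation T := #|F|.-1.
Hypothesis Tev : ~~ odd T.
Variables (w1 z : algC).
Hypotheses (hw1 : w1 ^+ T = 1) (hz : z ^+ T = 1) (hom : w1 * z != 1).

Lemma Ksum_val :
  Ksum a (fun x => mchar a w1 x * mchar a z x) =
  -1 - 2%:R * (w1 * z) ^+ T./2 * \sum_(n < T | slce a n) (w1 * z) ^+ n.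
Proof.
set om := w1 * z; set eps := om ^+ T./2.
have omT : om ^+ T = 1 by rewrite exprMn hw1 hz mulr1.
have eps2 : eps * eps = 1 by rewrite -expr2 -exprM muln2 -(Thalf Tev).
have psiE m : mchar a w1 (a ^+ m) * mchar a z (a ^+ m) = om ^+ m.
  by rewrite !(mchar_exp ha) // exprMn.
rewrite /Ksum (reindex_inj (addrI 1)) /= (sumF ha).
have e1 : forall y : F, 1 - (1 + y) = - y by move=> y; rewrite opprD addrA subrr add0r.
rewrite e1 oppr0 {2}/mchar eqxx mulr0 mulr0 add0r.
have negE n : - a ^+ n = a ^+ (n + T./2) by rewrite exprD (a_half ha Tev) mulrN1.
rewrite (eq_bigr (fun n : 'I_T => eps * (om ^+ n - (n == T./2 :> nat)%:R * om ^+ n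
                     - 2%:R * ((slce a n)%:R * om ^+ n)))); last first.
  move=> n _; rewrite e1 negE psiE (rho_val ha Tev) // exprD -/eps.
  case: eqP => [->|nh].
    have -> : slce a T./2 = false by rewrite /slce (a_half ha Tev) addNr eqxx.
    by rewrite !(mulr0, mul0r, subr0, mul1r, subrr).
  idtac.
  by case: (slce a n); rewrite /= ?mulr1 ?mulr0 ?mul0r ?mul1r ?subr0 ?sub0r; ring.
rewrite -big_distrr /= !sumrB -big_distrr /= geom0 //; last first.
rewrite (bigD1 (Ordinal (Thalf_lt ha Tev))) //= eqxx mul1r big1 ?addr0; last first.
  by move=> i /negPf; rewrite -val_eqE /= => ->; rewrite mul0r.
rewrite (big_mkcond (fun n : 'I_T => slce a n)) /=.
set A := \sum_(i < T) _.
have -> : \sum_(i < T) (if slce a i then om ^+ i else 0) = A.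
  by apply: eq_bigr => i _; case: (slce a i); rewrite ?mul1r ?mul0r.
have -> : (-1 : algC) = - (eps * eps) by rewrite eps2.
rewrite -/eps; ring.
Qed.

End K.


Section PolyPart.
Variable L : fieldType.

Definition projp (m r : nat) (f : {poly L}) : {poly L} :=
  \poly_(n < size f) (if (n %% m == r)%N then f`_n else 0).

Lemma coef_projp m r f n : (projp m r f)`_n = if (n %% m == r)%N then f`_n else 0.
Proof.
rewrite coef_poly; case: ltnP => // hn; rewrite nth_default //; by case: ifP.
Qed.

Lemma projpM m r (Q : {poly L}) c : (0 < m)%N ->
  projp m r (Q * ('X^m - c%:P)) = projp m r Q * ('X^m - c%:P).
Proof.
move=> m0; apply/polyP => i.
rewrite coef_projp !mulrBr !coefB !coefMXn !coefMC !coef_projp.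
case: ltnP => him; first by case: ifP; rewrite ?(sub0r, mulr0, subr0, mul0r, oppr0).
have -> : ((i - m) %% m = i %% m)%N by rewrite -{2}(subnK him) modnDr.
by case: ifP; rewrite ?(sub0r, mulr0, subr0, mul0r, oppr0).
Qed.

Lemma projp_eval m r (Q : {poly L}) (b : L) : (0 < m)%N ->
  (projp m r (Q * ('X^m - (b ^+ m)%:P))).[b] = 0.
Proof.
by move=> m0; rewrite projpM // hornerM hornerD hornerN hornerXn hornerC subrr mulr0.
Qed.

Lemma split_sum m r (S : {poly L}) (b : L) N : (0 < m)%N -> (size S <= N)%N ->
  (('X^m - (b ^+ m)%:P) %| S) ->
  \sum_(i < N) (if (i %% m == r)%N then S`_i else 0) * b ^+ i = 0.
Proof.
move=> m0 hN hd.
have hS : S = S %/ ('X^m - (b ^+ m)%:P) * ('X^m - (b ^+ m)%:P) by rewrite divpK.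
transitivity (projp m r S).[b]; last by rewrite hS projp_eval.
rewrite (horner_coef_wide b (_ : (size (projp m r S) <= N)%N)).
  by apply: eq_bigr => i _; rewrite coef_projp.
by apply: leq_trans hN; apply: size_poly.
Qed.

Lemma char2_pow (hL : 2 \in [pchar L]) (h : nat) (b : L) :
  ('X - b%:P) ^+ (2 ^ h) = 'X^(2 ^ h) - (b ^+ (2 ^ h))%:P.
Proof.
have hL' : 2 \in [pchar {poly L}] by rewrite pchar_poly.
rewrite !(oppr_pchar2 hL') exprDn_pchar; last by rewrite pnatX pnatE // hL'.
by rewrite -rmorphXn.
Qed.

Lemma char2_root1 (hL : 2 \in [pchar L]) (h : nat) (b : L) :
  b ^+ (2 ^ h) = 1 -> b = 1.
Proof.
move=> hb; have : (b - 1) ^+ (2 ^ h) = 0.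
  rewrite (oppr_pchar2 hL) exprDn_pchar; last by rewrite pnatX pnatE // hL.
  by rewrite hb expr1n -(mulr2n 1) (pcharf0 hL).
by move/eqP; rewrite expf_eq0 subr_eq0 => /andP[_ /eqP].
Qed.

End PolyPart.


Theorem mainTheorem7
  (p : nat) (F : finFieldType)
  (hp : prime p) (hodd : odd p) (hchar : p \in [pchar F])
  (alpha : F) (halpha : #|F|.-1.-primitive_root alpha)
  (h : nat) (h1 : (1 <= h)%N) (hu : (h <= logn 2 #|F|.-1)%N)
  (L : fieldType) (hL : 2 \in [pchar L])
  (beta : L) (k : nat) (hbT : beta ^+ #|F|.-1 = 1)
  (hk : k.-primitive_root beta) (hk1 : (1 < k)%N)
  (P : algC -> Prop) (pi : algC -> L) (zeta : algC)
  (pi1 : pi 1 = 1)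
  (piD : forall x y, Zcyc k x -> Zcyc k y -> pi (x + y) = pi x + pi y)
  (piM : forall x y, Zcyc k x -> Zcyc k y -> pi (x * y) = pi x * pi y)
  (pi_img : forall y : L, (exists x, Zcyc k x /\ pi x = y) <->
                          (exists q : {poly int}, y = (map_poly intr q).[beta]))
  (hP : forall x, P x <-> (Zcyc k x /\ pi x = 0))
  (hP2 : P 2)
  (hzeta : zeta ^+ k = 1) (hpizeta : pi zeta = beta)
  (hmult : (('X - beta%:P) ^+ (2 ^ h) %| Spoly alpha L)%R) :
  forall j : nat, (j < 2 ^ h)%N ->
    in_ext_ideal2 P (2 ^ h * k)
      (1 + Ksum alpha (fun x => mchar alpha (zetaN (2 ^ h) ^+ j) x
                                * mchar alpha zeta x)).
Proof.
move=> j hj.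
have T0' := T0 halpha.
have MT : (2 ^ h %| #|F|.-1)%N by rewrite pfactor_dvdn.
have M0 : (0 < 2 ^ h)%N by rewrite expn_gt0.
have Tev : ~~ odd #|F|.-1.
  rewrite -dvdn2; apply: dvdn_trans MT.
  by rewrite -(prednK h1) expnS dvdn_mulr.
have k0 : (0 < k)%N by apply: ltnW.
have kT : (k %| #|F|.-1)%N by rewrite (prim_order_dvd hk) hbT.
have Zz : Zcyc k zeta by apply: Zcyc_unity.
have pi0 : pi 0 = 0.
  have := piD 0 0 (Zcyc0 k) (Zcyc0 k); rewrite addr0 => e.
  by apply: (addrI (pi 0)); rewrite addr0 -e.
have pi_exp n : pi (zeta ^+ n) = beta ^+ n.
  elim: n => [|n IH]; first by rewrite !expr0.
  by rewrite !exprSr piM ?IH ?hpizeta //; apply: Zcyc_exp.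
have pi_sum (I : Type) (r : seq I) (Pr : pred I) (f : I -> algC) :
    (forall i, Zcyc k (f i)) -> pi (\sum_(i <- r | Pr i) f i) = \sum_(i <- r | Pr i) pi (f i).
  move=> hf; elim: r => [|a r IH]; first by rewrite !big_nil.
  rewrite !big_cons; case: (Pr a) => //.
  by rewrite piD ?IH //; apply: Zcyc_sum.
set xi := zetaN (2 ^ h).
have pxi := zetaN_prim (2 ^ h) M0.
have xiM : xi ^+ (2 ^ h) = 1 := prim_expr_order pxi.
have xiT : xi ^+ #|F|.-1 = 1 by apply/eqP; rewrite -(prim_order_dvd pxi).
have hw1 : (xi ^+ j) ^+ #|F|.-1 = 1 by rewrite exprAC xiT expr1n.
have hz : zeta ^+ #|F|.-1 = 1 by rewrite -(divnK kT) mulnC exprM hzeta expr1n.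
have hom : xi ^+ j * zeta != 1.
  apply/eqP => h0.
  have : zeta ^+ (2 ^ h) = 1.
    by have := congr1 (fun x => x ^+ (2 ^ h)) h0; rewrite /= exprMn exprAC xiM !expr1n mul1r.
  move/(congr1 pi); rewrite pi_exp pi1 => /(@char2_root1 L hL) hb1.
  by move: (prim_order_dvd hk 1); rewrite expr1 hb1 eqxx dvdn1 => /eqP hk1'; rewrite hk1' in hk1.
rewrite (@Ksum_val F alpha halpha Tev _ _ hw1 hz hom).
set om := xi ^+ j * zeta; set eps := om ^+ #|F|.-1./2.
set M := (2 ^ h)%N.
pose Ar (r : 'I_M) := \sum_(n < #|F|.-1 | ((n %% M)%N == r) && slce alpha n) zeta ^+ n.
have Adec : \sum_(n < #|F|.-1 | slce alpha n) om ^+ n = \sum_(r < M) xi ^+ (j * r) * Ar r.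
  rewrite (eq_bigr (fun r : 'I_M => \sum_(n < #|F|.-1 | slce alpha n)
     (if (n %% M)%N == r then xi ^+ (j * r) * zeta ^+ n else 0))); last first.
    by move=> r _; rewrite /Ar mulr_sumr big_mkcondl.
  rewrite exchange_big /=; apply: eq_bigr => n _.
  rewrite (bigD1 (Ordinal (ltn_pmod n M0))) //= eqxx big1 ?addr0.
    by rewrite /om exprMn exprAC mulnC exprM (expr_mod _ xiM).
  move=> i hi; case: eqP => // e; move: hi; rewrite -val_eqE /= -e eqxx //.
have epsE : eps = 1 \/ eps = -1.
  have : eps ^+ 2 = 1 by rewrite -exprM muln2 -(Thalf Tev) exprMn hw1 hz mulr1.
  by move/eqP; rewrite sqrf_eq1 => /orP[/eqP|/eqP]; [left|right].
exists [seq (Ar r, - eps * xi ^+ (j * r)) | r <- index_enum 'I_M]; split.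
  move=> x /mapP [r _ ->] /=; split.
    apply/hP; split.
      by apply: Zcyc_sum => n; apply: Zcyc_exp.
    rewrite /Ar pi_sum; last by move=> n; apply: Zcyc_exp.
    rewrite (eq_bigr (fun n : 'I_#|F|.-1 => beta ^+ n)); last by move=> n _; rewrite pi_exp.
    have hd : ('X^M - (beta ^+ M)%:P) %| Spoly alpha L by rewrite -(@char2_pow L hL h beta).
    have hs : (size (Spoly alpha L) <= #|F|.-1)%N by rewrite /Spoly size_poly.
    have := @split_sum L M r (Spoly alpha L) beta #|F|.-1 M0 hs hd.
    move=> e; rewrite -[in RHS]e big_mkcond /=; apply: eq_bigr => n _.
    rewrite /Spoly coef_poly ltn_ord.
    by case: eqP; case: (slce alpha n); rewrite /= ?(mul1r, mul0r).
  apply: Zcyc_mul.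
    by case: epsE => ->; rewrite ?opprK; [exact: ZcycN1|exact: Zcyc1].
  apply: Zcyc_unity; first by rewrite muln_gt0 M0.
  by rewrite exprAC (exprM xi M k) xiM !expr1n.
rewrite big_map Adec.
transitivity (\sum_(r < M) (- 2%:R * eps) * (xi ^+ (j * r) * Ar r)).
  rewrite -big_distrr /=; ring.
by apply: eq_bigr => r _ /=; ring.
Qed.
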